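(* Let $a,b\in C^0(\mathbb{R})$ be even and positive, and let $G\in C^0(\mathbb{R})$ be even with $G(s)\ge G(M)=0$ for all $s\in\mathbb{R}$ and $G(s)>0$ for $s\in[0,M)$, for some $M>0$. Let $m>0$. Then there exists a constant $C^{as}>0$ depending only on $a,b,G,M,m$ (and not on $L$) such that for every $L>0$, with $I=(-L,L)$, $$\mathcal{E}(u,I)\ge C^{as}\quad\text{for all odd } u\in H^1_m(I).$$ Moreover, one can take $$C^{as}:=\inf_{t>0}\Big\{\frac{m_0^2}{\int_0^t 1/a}+2G_0\int_0^t b\Big\},\qquad m_0:=\tfrac12\min\{m,M\},\quad G_0:=\inf_{s\in(0,m_0)}G(s).$$
   Context: $H^1_m(I):=\{u\in H^1(I):u(-L)=-m,\ u(L)=m\}$ and $\mathcal{E}(u,I):=\int_{-L}^L\{\tfrac12(u')^2a(x)+G(u)b(x)\}\,dx$. *)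

(* Defs.v *)
From HB Require Import structures.
From mathcomp Require Import all_boot all_order all_algebra.
From mathcomp Require Import all_classical all_reals all_analysis.
Set Implicit Arguments. Unset Strict Implicit. Unset Printing Implicit Defensive.
Import Order.TTheory GRing.Theory Num.Theory numFieldNormedType.Exports.
Local Open Scope classical_set_scope.
Local Open Scope ring_scope.

Section Defs.
Variable R : realType.
Notation mu := (@lebesgue_measure R).

(* u (restricted to [-L,L]) belongs to H^1(-L,L) with weak derivative u':
   the 1-D characterization of H^1 on a bounded interval: u' is measurable,
   square-integrable on (-L,L), and u is (the continuous representative)
   u(x) = u(-L) + \int_{-L}^x u'. *)
Definition H1_with_deriv (L : R) (u u' : R -> R) : Prop :=
  [/\ measurable_fun `[-L, L] u',
      (\int[mu]_(x in `[(- L)%R, L]) ((u' x) ^+ 2)%:E < +oo)%E &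
      forall x, -L <= x <= L ->
        u x = u (- L) + Rintegral mu `[-L, x] u'].

Definition H1m_with_deriv (L m : R) (u u' : R -> R) : Prop :=
  [/\ H1_with_deriv L u u', u (- L) = - m & u L = m].

Definition odd_on (L : R) (u : R -> R) : Prop :=
  forall x, -L < x < L -> u (- x) = - u x.

Definition energy (a b G : R -> R) (L : R) (u u' : R -> R) : \bar R :=
  (\int[mu]_(x in `](- L)%R, L[) ((2^-1 * (u' x) ^+ 2 * a x + G (u x) * b x)%:E))%E.

Definition m0 (m M : R) : R := 2^-1 * Num.min m M.

Definition G0 (G : R -> R) (m M : R) : R :=
  inf [set G s | s in `]0, m0 m M[].

Definition Cas (a b G : R -> R) (m M : R) : R :=
  inf [set (m0 m M) ^+ 2 / Rintegral mu `[0, t] (fun x => 1 / a x)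
           + 2 * G0 G m M * Rintegral mu `[0, t] b | t in `]0, +oo[].

End Defs.

(* Main.v *)
Require Import Defs.
From HB Require Import structures.
From mathcomp Require Import all_boot all_order all_algebra.
From mathcomp Require Import all_classical all_reals all_analysis.
From mathcomp Require Import ring lra.
Import Order.TTheory GRing.Theory Num.Theory numFieldNormedType.Exports.
Import measurable_realfun.
Local Open Scope classical_set_scope.
Local Open Scope ring_scope.
Section S.
Variable R : realType.
Notation mu := (@lebesgue_measure R).

Lemma cont_within (f : R -> R) A : continuous f -> {within A, continuous f}.
Proof. by move=> cf; apply: continuous_subspaceT. Qed.

Lemma int_integrable (g : R -> R) (x y : R) : continuous g ->
  mu.-integrable `[x, y] (EFin \o g).
Proof.
move=> cg; apply: continuous_compact_integrable; first exact: segment_compact.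
exact: cont_within.
Qed.

Lemma pos_int (g : R -> R) (t : R) : continuous g -> (forall x, 0 < g x) ->
  0 < t -> 0 < \int[mu]_(x in `[0, t]) g x.
Proof.
move=> cg gp t0.
have [c _ cmin] := EVT_min (ltW t0) (@cont_within g _ cg).
have : \int[mu]_(x in `[0, t]) (g c) <= \int[mu]_(x in `[0, t]) g x.
  apply: le_Rintegral => //.
  - by apply: int_integrable; exact: cst_continuous.
  - exact: int_integrable.
rewrite Rintegral_cst//= lebesgue_measure_itv/= lte_fin t0/= subr0.
by move=> H; apply: lt_le_trans H; rewrite mulr_gt0.
Qed.

Lemma even_int (g : R -> R) (t : R) : continuous g -> (forall x, g (- x) = g x) ->
  0 <= t -> \int[mu]_(x in `[- t, t]) g x = 2 * \int[mu]_(x in `[0, t]) g x.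
Proof.
move=> cg ge t0.
have H := @Rintegral_itvB R g (BLeft (- t)) (BRight t) 0 (@int_integrable g (- t) t cg).
rewrite !bnd_simp oppr_le0 t0 in H.
have {}H := H isT isT.
rewrite Rintegral_itv_obnd_cbnd in H; last first.
  by apply: integrableS (@int_integrable g 0 t cg) => //; apply: subset_itvr; rewrite bnd_simp.
have E : \int[mu]_(x in `[- t, 0]) g x = \int[mu]_(x in `[0, t]) g x.
  have := integration_by_substitution_oppr t0 (@cont_within g _ cg).
  rewrite oppr0 /Rintegral => ->; congr fine.
  by apply: eq_integral => x _ /=; rewrite ge.
have -> : \int[mu]_(x in `[- t, t]) g x = \int[mu]_(x in `[- t, 0]) g x +
  \int[mu]_(x in `[0, t]) g x by rewrite -H; ring.
by rewrite E; ring.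
Qed.

Lemma within_eps (f : R -> R) (A : set R) x e : {within A, continuous f} ->
  A x -> 0 < e ->
  exists2 d, 0 < d & forall y, A y -> `|x - y| < d -> `|f x - f y| < e.
Proof.
move=> /subspace_continuousP cf Ax e0.
have /cvgrPdist_lt /(_ e e0) := cf x Ax.
rewrite /prop_near1 /within /= => /nbhs_ballP [d d0 Hd].
by exists d => // y Ay xy; apply: Hd => //.
Qed.
End S.

Section S2.
Variable R : realType.
Notation mu := (@lebesgue_measure R).

Lemma m0_facts (m M : R) : 0 < m -> 0 < M ->
  [/\ 0 < m0 m M, m0 m M < M & 2 * m0 m M <= m].
Proof.
move=> m0' M0; rewrite /m0.
have h1 : 0 < Num.min m M by rewrite lt_min m0' M0.
have h2 : Num.min m M <= M by rewrite ge_min lexx orbT.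
have h3 : Num.min m M <= m by rewrite ge_min lexx.
split; [by rewrite mulr_gt0 // invr_gt0 | lra | lra].
Qed.

Lemma G0_facts (G : R -> R) (M m : R) : continuous G ->
  (forall s, G (- s) = G s) -> 0 < M -> G M = 0 -> (forall s, G M <= G s) ->
  (forall s, 0 <= s < M -> 0 < G s) -> 0 < m ->
  0 < G0 G m M /\ forall s, `|s| < m0 m M -> G0 G m M <= G s.
Proof.
move=> cG Ge M0 GM Gmin Gpos mpos.
have [p0 pM p2] := @m0_facts m M mpos M0.
set p := m0 m M in p0 pM p2 *.
set S := [set G s | s in `]0, p[].
have Sne : nonempty S.
  exists (G (p / 2)), (p / 2) => //; rewrite /= in_itv /=; apply/andP; split; lra.
have Slb : has_lbound S.
  by exists 0 => _ [s _ <-]; rewrite -GM.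
have Sinf : forall s, 0 < s < p -> G0 G m M <= G s.
  by move=> s sp; apply: ge_inf => //; exists s => //; rewrite /= in_itv /= sp.
split.
  have [c cin cmin] := EVT_min (ltW p0) (@cont_within R G _ cG).
  apply: (@lt_le_trans _ _ (G c)).
    apply: Gpos; move: cin; rewrite in_itv /= => /andP[c0 cp].
    by rewrite c0 /=; apply: le_lt_trans pM.
  apply: lb_le_inf => // _ [s sin <-]; apply: cmin.
  by move: sin; rewrite /= !in_itv /= => /andP[s0 sp]; rewrite (ltW s0) (ltW sp).
have G0le0 : G0 G m M <= G 0.
  rewrite leNgt; apply/negP => H.
  have e0 : 0 < G0 G m M - G 0 by rewrite subr_gt0.
  have [d d0 Hd] := @within_eps R G setT 0 _ (@cont_within R G setT cG) I e0.
  set y := Num.min d p / 2.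
  have hm1 : Num.min d p <= d by rewrite ge_min lexx.
  have hm2 : Num.min d p <= p by rewrite ge_min lexx orbT.
  have hm0 : 0 < Num.min d p by rewrite lt_min d0 p0.
  have yd : y < d by rewrite /y; lra.
  have h := Hd y I; rewrite sub0r normrN ger0_norm in h; last by rewrite /y; lra.
  have {}h := h yd.
  have : G0 G m M <= G y by apply: Sinf; rewrite /y; apply/andP; split; lra.
  move: h; rewrite ltr_norml; lra.
move=> s; case: (ltgtP s 0) => [sn|sp|->] // hs.
- rewrite -Ge; apply: Sinf; rewrite ltr0_norm // in hs; apply/andP; split; lra.
- rewrite gtr0_norm // in hs; apply: Sinf; apply/andP; split; lra.
Qed.

Lemma mono_int (g : R -> R) (s t : R) : continuous g -> (forall x, 0 <= g x) ->
  0 <= s <= t -> \int[mu]_(x in `[0, s]) g x <= \int[mu]_(x in `[0, t]) g x.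
Proof.
move=> cg gp /andP[s0 st].
have H := @Rintegral_itvB R g (BLeft 0) (BRight t) s (@int_integrable R g 0 t cg).
rewrite !bnd_simp s0 st in H; have {}H := H isT isT.
have : 0 <= \int[mu]_(x in `]s, t]) g x by apply: Rintegral_ge0.
rewrite -H; lra.
Qed.

Lemma Cas_facts (a b G : R -> R) (M m : R) :
  continuous a -> continuous b -> continuous G ->
  (forall x, 0 < a x) -> (forall x, 0 < b x) ->
  (forall s, G (- s) = G s) ->
  0 < M -> G M = 0 -> (forall s, G M <= G s) ->
  (forall s, 0 <= s < M -> 0 < G s) ->
  0 < m ->
  0 < Cas a b G m M /\ forall t, 0 < t ->
    Cas a b G m M <= m0 m M ^+ 2 / \int[mu]_(x in `[0, t]) (1 / a x)
           + 2 * G0 G m M * \int[mu]_(x in `[0, t]) b x.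
Proof.
move=> ca cb cG apos bpos Ge M0 GM Gmin Gpos mpos.
have [G0p _] := @G0_facts G M m cG Ge M0 GM Gmin Gpos mpos.
have [p0 _ _] := @m0_facts m M mpos M0.
have cia : continuous (fun x => 1 / a x).
  move=> x; apply: cvgM; first exact: cvg_cst.
  by apply: cvgV; [rewrite gt_eqF | exact: ca].
have iap : forall x, 0 < 1 / a x by move=> x; rewrite div1r invr_gt0.
set A := fun t => \int[mu]_(x in `[0, t]) (1 / a x).
set B := fun t => \int[mu]_(x in `[0, t]) b x.
set f := fun t => m0 m M ^+ 2 / A t + 2 * G0 G m M * B t.
have -> : Cas a b G m M = inf [set f t | t in `]0, +oo[] by [].
have fge0 : forall t, 0 <= f t.
  move=> t; rewrite /f addr_ge0 //.
    by rewrite divr_ge0 ?sqr_ge0 // Rintegral_ge0 // => x _; exact: ltW.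
  by rewrite !mulr_ge0 ?(ltW G0p) // Rintegral_ge0 // => x _; exact: ltW.
have Sne : nonempty [set f t | t in `]0, +oo[].
  by exists (f 1), 1 => //; rewrite /= in_itv /= andbT.
have Slb : has_lbound [set f t | t in `]0, +oo[].
  by exists 0 => _ [t _ <-].
split; last first.
  by move=> t t0; apply: ge_inf => //; exists t => //; rewrite /= in_itv /= t0.
have A1 : 0 < A 1 by apply: pos_int.
have B1 : 0 < B 1 by apply: pos_int.
set k := Num.min (m0 m M ^+ 2 / A 1) (2 * G0 G m M * B 1).
have k0 : 0 < k by rewrite lt_min divr_gt0 ?exprn_gt0 // !mulr_gt0.
apply: (lt_le_trans k0); apply: lb_le_inf => // y [t].
rewrite /= in_itv /= andbT => t0 ft; rewrite -ft.
have At : 0 < A t by apply: pos_int.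
have Bt : 0 <= B t by apply: Rintegral_ge0 => x _; exact: ltW.
have Att : 0 <= m0 m M ^+ 2 / A t by rewrite divr_ge0 ?sqr_ge0 // ltW.
have Btt : 0 <= 2 * G0 G m M * B t by rewrite !mulr_ge0 // ltW.
case: (lerP t 1) => t1.
  have km : k <= m0 m M ^+ 2 / A 1 by rewrite /k ge_min lexx.
  have : A t <= A 1 by apply: mono_int => //; [move=> x; exact: ltW | rewrite (ltW t0)].
  move=> AA.
  have : m0 m M ^+ 2 / A 1 <= m0 m M ^+ 2 / A t.
    apply: ler_wpM2l; first exact: sqr_ge0.
    by rewrite lef_pV2 // posrE.
  rewrite /f; lra.
have km : k <= 2 * G0 G m M * B 1 by rewrite /k ge_min lexx orbT.
have : B 1 <= B t by apply: mono_int => //; [move=> x; exact: ltW | rewrite ler01 (ltW t1)].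
move=> BB.
have : 2 * G0 G m M * B 1 <= 2 * G0 G m M * B t.
  by apply: ler_wpM2l => //; rewrite mulr_ge0 // ltW.
rewrite /f; lra.
Qed.
End S2.

Section S3.
Variable R : realType.
Notation mu := (@lebesgue_measure R).

Lemma iZ (D : set R) (f : R -> R) (k : R) : measurable D ->
  mu.-integrable D (EFin \o f) -> mu.-integrable D (EFin \o (fun x => k * f x)).
Proof.
move=> mD fi; have := @integrableZl _ _ _ mu D mD k _ fi.
by apply: eq_integrable => // x _.
Qed.

Lemma iB (D : set R) (f g : R -> R) : measurable D ->
  mu.-integrable D (EFin \o f) -> mu.-integrable D (EFin \o g) ->
  mu.-integrable D (EFin \o (fun x => f x - g x)).
Proof.
move=> mD fi gi; have := @integrableB _ _ _ mu D mD _ _ fi gi.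
by apply: eq_integrable => // x _ /=; rewrite EFinB.
Qed.

Lemma Rint_E (D : set R) (f : R -> R) : measurable D ->
  mu.-integrable D (EFin \o f) ->
  (\int[mu]_(x in D) (f x)%:E = (\int[mu]_(x in D) f x)%:E)%E.
Proof. by move=> mD fi; rewrite /Rintegral fineK // integrable_fin_num. Qed.
End S3.

Section S4.
Variable R : realType.
Notation mu := (@lebesgue_measure R).

Lemma u_facts (L m p : R) (u u' : R -> R) : 0 < L -> 0 < p -> 2 * p <= m ->
  H1m_with_deriv L m u u' -> odd_on L u ->
  exists beta, [/\ 0 < beta, beta <= L,
    forall x, - beta < x < beta -> `|u x| < p,
    mu.-integrable `[- L, L] (EFin \o u') /\ {within `[- L, L], continuous u} &
    p <= `|u beta| /\ \int[mu]_(x in `[- beta, beta]) u' x = 2 * u beta].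
Proof.
move=> L0 p0 p2 [[mu' sq rep] umL uL] odd.
have iu' : mu.-integrable `[- L, L] (EFin \o u').
  apply: (@le_integrable _ _ _ mu _ _ (EFin \o u') (fun x => (1 + u' x ^+ 2)%:E)).
  - exact: measurable_itv.
  - by apply/measurable_EFinP.
  - move=> x _ /=; rewrite !lee_fin; apply: le_trans (ler_norm _).
    rewrite -real_normK ?num_real //.
    have : 0 <= `|u' x| by [].
    set v := `|u' x|; nra.
  - have -> : (fun x => (1 + u' x ^+ 2)%:E) = (EFin \o cst 1) \+ (fun x => (u' x ^+ 2)%:E).
      by apply/funext => x /=; rewrite EFinD.
    apply: integrableD => //.
      by apply: int_integrable; exact: cst_continuous.
    apply/integrableP; split.
      by apply/measurable_EFinP; apply: measurable_funX.
    under eq_integral do rewrite gee0_abs ?lee_fin ?sqr_ge0 //.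
    exact: sq.
have cu : {within `[- L, L], continuous u}.
  have cint := parameterized_integral_continuous (ltW (gtrN L0)) iu'.
  apply: (@subspace_eq_continuous _ _ _
     (fun x => - m + parameterized_integral mu (- L) x u')).
    move=> x; rewrite inE /= => xin; rewrite /from_subspace /= rep ?umL //.
  by move=> x; apply: cvgD; [exact: cvg_cst | exact: cint].
have u0 : u 0 = 0.
  have := odd 0; rewrite oppr0 => /(_ _) h.
  have : u 0 = - u 0 by apply: h; rewrite oppr_lt0 L0.
  lra.
set S := [set x | 0 <= x <= L /\ p <= `|u x|].
have SL : S L by split; [rewrite (ltW L0) lexx | rewrite uL ger0_norm; lra].
have Sne : nonempty S by exists L.
have Slb : has_lbound S by exists 0 => x [/andP[]].
have hinf : has_inf S by split.
set beta := inf S.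
have b0 : 0 <= beta by apply: lb_le_inf => // x [/andP[]].
have bL : beta <= L by apply: ge_inf.
have below : forall x, 0 <= x < beta -> `|u x| < p.
  move=> x /andP[x0 xb]; rewrite ltNge; apply/negP => px.
  have : beta <= x by apply: ge_inf => //; split => //; rewrite x0 /=; lra.
  lra.
have ub : p <= `|u beta|.
  rewrite leNgt; apply/negP => H.
  have e0 : 0 < p - `|u beta| by rewrite subr_gt0.
  have bin : (`[- L, L]%classic : set R) beta by rewrite /= in_itv /= bL andbT; lra.
  have [d d0 Hd] := @within_eps R u _ _ _ cu bin e0.
  have [s Ss sd] := inf_adherent d0 hinf.
  have bs : beta <= s by apply: ge_inf.
  case: Ss => /andP[s0 sL] ps.
  have := Hd s; rewrite /= in_itv /= sL andbT => /(_ _) /(_ _).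
  have sLL : - L <= s by lra.
  move=> /(_ sLL); rewrite ler0_norm ?opprB; last by lra.
  have sdd : s - beta < d by lra.
  move=> /(_ sdd) hh.
  have : `|u s| - `|u beta| <= `|u beta - u s| by rewrite distrC lerB_dist.
  lra.
have bpos : 0 < beta.
  rewrite lt_neqAle b0 andbT; apply/eqP => hb.
  by move: ub; rewrite -hb u0 normr0; lra.
exists beta; split => //.
- move=> x /andP[xl xr]; case: (lerP 0 x) => x0.
    by apply: below; rewrite x0.
  have h := odd (- x); rewrite opprK in h.
  rewrite h; last by apply/andP; split; lra.
  by rewrite normrN; apply: below; apply/andP; split; lra.
split => //.
have umb : u (- beta) = - u beta.
  case: (ltrP beta L) => bl.
    by apply: odd; apply/andP; split; lra.
  have -> : beta = L by apply/eqP; rewrite eq_le bL bl.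
  by rewrite umL uL.
have H := @Rintegral_itvB R u' (BLeft (- L)) (BRight beta) (- beta).
rewrite !bnd_simp in H.
have iLb : mu.-integrable `[- L, beta] (EFin \o u').
  by apply: integrableS iu' => //; apply: subset_itv; rewrite bnd_simp.
have {}H := H iLb.
have h1 : - L <= - beta by lra.
have h2 : - beta <= beta by lra.
have {}H := H h1 h2.
rewrite Rintegral_itv_obnd_cbnd in H; last first.
  by apply: integrableS iu' => //; apply: subset_itv; rewrite bnd_simp; lra.
rewrite -H.
have r1 := rep beta; have r2 := rep (- beta).
rewrite r1 ?r2 in umb; last 2 first.
- by apply/andP; split; lra.
- by apply/andP; split; lra.
rewrite r1; last by apply/andP; split; lra.
lra.
Qed.
End S4.


Lemma Rint_oo_cc (R : realType) (f : R -> R) (x y : R) :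
  (lebesgue_measure).-integrable `[x, y] (EFin \o f) ->
  \int[lebesgue_measure]_(t in `]x, y[) f t = \int[lebesgue_measure]_(t in `[x, y]) f t.
Proof.
move=> fi.
rewrite Rintegral_itv_bndo_bndc; last first.
  by apply: integrableS fi => //; apply: subset_itv; rewrite bnd_simp.
rewrite Rintegral_itv_obnd_cbnd //.
by apply: integrableS fi => //; apply: subset_itv; rewrite bnd_simp.
Qed.

Theorem proposition5p7 (R : realType) (a b G : R -> R) (M m : R) :
  continuous a -> continuous b -> continuous G ->
  (forall x, a (- x) = a x) -> (forall x, b (- x) = b x) ->
  (forall x, 0 < a x) -> (forall x, 0 < b x) ->
  (forall s, G (- s) = G s) ->
  0 < M -> G M = 0 -> (forall s, G M <= G s) ->
  (forall s, 0 <= s < M -> 0 < G s) ->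
  0 < m ->
  0 < Cas a b G m M /\
  forall L : R, 0 < L ->
  forall u u' : R -> R,
    H1m_with_deriv L m u u' -> odd_on L u ->
    ((Cas a b G m M)%:E <= energy a b G L u u')%E.
Proof.
move=> ca cb cG ae be apos bpos Ge M0 GM Gmin Gpos mpos.
have [Cpos Cle] := @Cas_facts R a b G M m ca cb cG apos bpos Ge M0 GM Gmin Gpos mpos.
split => // L L0 u u' Hu odd.
have [p0 pM p2] := @m0_facts R m M mpos M0.
have [G0p G0le] := @G0_facts R G M m cG Ge M0 GM Gmin Gpos mpos.
set p := m0 m M in p0 pM p2 G0le Cle *.
set g0 := G0 G m M in G0p G0le Cle *.
have [beta [betap bL bnd [iu' cu] [ub Sint]]] := @u_facts R L m p u u' L0 p0 p2 Hu odd.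
case: Hu => [[mu' sq rep] umL uL].
have := Cle beta betap.
set A := \int[lebesgue_measure]_(x in `[0, beta]) (1 / a x).
set B := \int[lebesgue_measure]_(x in `[0, beta]) b x.
move=> Cb; apply: (le_trans (_ : _ <= (p ^+ 2 / A + 2 * g0 * B)%:E)%E).
  by rewrite lee_fin.
have ma : measurable_fun setT a := continuous_measurable_fun ca.
have mb : measurable_fun setT b := continuous_measurable_fun cb.
have mG : measurable_fun setT G := continuous_measurable_fun cG.
have muL : measurable_fun `[- L, L] u.
  exact: subspace_continuous_measurable_fun.
have mGu : measurable_fun `[- L, L] (G \o u) := measurableT_comp mG muL.
set h := fun x => 2^-1 * (u' x) ^+ 2 * a x + G (u x) * b x.
set k1 := fun x => 2^-1 * (u' x) ^+ 2 * a x.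
set k := fun x => k1 x + g0 * b x.
have mk1 : measurable_fun `[- L, L] k1.
  apply: measurable_funM; last exact: measurable_funTS.
  apply: measurable_funM; first exact: measurable_cst.
  exact: measurable_funX.
have mh : measurable_fun `[- L, L] h.
  apply: measurable_funD; first exact: mk1.
  by apply: measurable_funM => //; exact: measurable_funTS.
have mk : measurable_fun `[- L, L] k.
  apply: measurable_funD; first exact: mk1.
  by apply: measurable_funM; [exact: measurable_cst | exact: measurable_funTS].
have sJ : `]- beta, beta[ `<=` `]- L, L[.
  by apply: subset_itv; rewrite bnd_simp; lra.
have sO : `]- L, L[ `<=` `[- L, L] by apply: subset_itv; rewrite bnd_simp.
have sJc : `]- beta, beta[ `<=` `[- L, L] := subset_trans sJ sO.
have k1ge0 : forall x, 0 <= k1 x.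
  move=> x; rewrite /k1 mulr_ge0 //; last exact: ltW.
  by rewrite mulr_ge0 ?sqr_ge0 // invr_ge0.
have hge0 : forall x, 0 <= h x.
  move=> x; rewrite /h addr_ge0 //; first exact: k1ge0.
  rewrite mulr_ge0 //; last exact: ltW.
  by rewrite -GM.
have kge0 : forall x, 0 <= k x.
  by move=> x; rewrite /k addr_ge0 // mulr_ge0 // ?(ltW G0p) // ltW.
pose J : set R := `]- beta, beta[%classic.
have E1 : (\int[lebesgue_measure]_(x in J) (h x)%:E <=
           energy a b G L u u')%E.
  rewrite /energy; apply: ge0_subset_integral => //.
  - exact: measurable_itv.
  - apply: (measurableT_comp (f := EFin) (g := h)) => //.
    exact: measurable_funS mh.
  - by move=> x _; rewrite lee_fin; apply: hge0.
have E2 : (\int[lebesgue_measure]_(x in J) (k x)%:E <=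
           \int[lebesgue_measure]_(x in J) (h x)%:E)%E.
  apply: ge0_le_integral => //.
  - exact: measurable_itv.
  - by move=> x _; rewrite lee_fin; apply: kge0.
  - apply: (measurableT_comp (f := EFin) (g := k)) => //.
    exact: measurable_funS mk.
  - apply: (measurableT_comp (f := EFin) (g := h)) => //.
    exact: measurable_funS mh.
  - move=> x; rewrite /J /= in_itv /= => xJ; rewrite lee_fin /h /k /k1 lerD2l.
    by apply: ler_wpM2r; [exact: ltW | apply: G0le; apply: bnd].
have cia : continuous (fun x => 1 / a x).
  move=> x; apply: cvgM; first exact: cvg_cst.
  by apply: cvgV; [rewrite gt_eqF | exact: ca].
have sJb : J `<=` `[- beta, beta] by apply: subset_itv; rewrite bnd_simp.
have mJ : measurable J by exact: measurable_itv.
have iJb : lebesgue_measure.-integrable J (EFin \o b).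
  by apply: integrableS (@int_integrable R b (- beta) beta cb).
have iJa : lebesgue_measure.-integrable J (EFin \o (fun x => 1 / a x)).
  by apply: integrableS (@int_integrable R _ (- beta) beta cia).
have iJu : lebesgue_measure.-integrable J (EFin \o u').
  by apply: integrableS iu'.
have IB : \int[lebesgue_measure]_(x in J) b x = 2 * B.
  rewrite /J Rint_oo_cc; last exact: int_integrable.
  by rewrite even_int // ltW.
have IA : \int[lebesgue_measure]_(x in J) (1 / a x) = 2 * A.
  rewrite /J Rint_oo_cc; last exact: int_integrable.
  by rewrite even_int // ?ltW // => x; rewrite ae.
have IU : \int[lebesgue_measure]_(x in J) u' x = 2 * u beta.
  rewrite /J Rint_oo_cc //; apply: integrableS iu' => //.
  by apply: subset_itv; rewrite bnd_simp; lra.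
have E3 : (\int[lebesgue_measure]_(x in J) (k x)%:E =
           \int[lebesgue_measure]_(x in J) (k1 x)%:E + (g0 * (2 * B))%:E)%E.
  rewrite /k; under eq_integral do rewrite EFinD.
  rewrite ge0_integralD //.
  - congr (_ + _)%E.
    rewrite Rint_E //; last exact: iZ.
    by rewrite RintegralZl // IB.
  - by move=> x _; rewrite lee_fin.
  - apply: (measurableT_comp (f := EFin) (g := k1)) => //.
    exact: measurable_funS mk1.
  - by move=> x _; rewrite lee_fin mulr_ge0 // ltW.
  - apply: (measurableT_comp (f := EFin) (g := fun x => g0 * b x)) => //.
    apply: measurable_funM; [exact: measurable_cst | exact: measurable_funTS].
have A0 : 0 < A.
  by apply: pos_int => // x; rewrite div1r invr_gt0.
have E4 : ((p ^+ 2 / A)%:E <= \int[lebesgue_measure]_(x in J) (k1 x)%:E)%E.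
  have [fin|] := ltP (\int[lebesgue_measure]_(x in J) (k1 x)%:E)%E +oo%E; last first.
    by rewrite leye_eq => /eqP ->; rewrite leey.
  have ik1 : lebesgue_measure.-integrable J (EFin \o k1).
    apply/integrableP; split.
      apply: (measurableT_comp (f := EFin) (g := k1)) => //.
      exact: measurable_funS mk1.
    under eq_integral do rewrite gee0_abs ?lee_fin //.
    exact: fin.
  rewrite Rint_E // lee_fin.
  set lam := u beta / A.
  have le1 : \int[lebesgue_measure]_(x in J) (lam * u' x - (lam ^+ 2 / 2) * (1 / a x))
             <= \int[lebesgue_measure]_(x in J) k1 x.
    apply: le_Rintegral => //.
      by apply: iB => //; apply: iZ.
    move=> x _; have ax := apos x.
    rewrite -subr_ge0.
    have -> : k1 x - (lam * u' x - lam ^+ 2 / 2 * (1 / a x)) =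
              (u' x * a x - lam) ^+ 2 / (2 * a x).
      by rewrite /k1; field; rewrite gt_eqF.
    by rewrite divr_ge0 ?sqr_ge0 // mulr_ge0 // ltW.
  have iJa' : lebesgue_measure.-integrable J (EFin \o (fun x => (a x)^-1)).
    by apply: eq_integrable iJa => // x _ /=; rewrite div1r.
  have IA' : \int[lebesgue_measure]_(x in J) (a x)^-1 = 2 * A.
    by rewrite -IA; apply: eq_Rintegral => x _; rewrite div1r.
  rewrite RintegralB // in le1; [| exact: iZ | exact: iZ].
  rewrite !RintegralZl // mul1r IU IA' in le1.
  apply: le_trans le1.
  have -> : lam * (2 * u beta) - lam ^+ 2 / 2 * (2 * A) = u beta ^+ 2 / A.
    by rewrite /lam; field; rewrite gt_eqF.
  apply: ler_wpM2r; first by rewrite invr_ge0 ltW.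
  have -> : u beta ^+ 2 = `|u beta| ^+ 2 by rewrite real_normK ?num_real.
  have : 0 <= p by exact: ltW.
  move: ub; set v := `|u beta|; nra.
apply: le_trans E1; apply: le_trans E2; rewrite E3.
have -> : 2 * g0 * B = g0 * (2 * B) by ring.
by rewrite EFinD; apply: leeD.
Qed.
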